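(* Let $s=a+ib$ with $a\ge1$, $b\in\mathbb{R}$, and let $k\in[0,1)$ satisfy $|b/s|\le k$. Let $g$ be analytic in $\mathbb{D}^*$ with $g(\zeta)=\zeta+\frac{d}{\zeta}+\cdots$ near $\infty$, satisfying for all $\zeta\in\mathbb{D}^*\setminus\{\infty\}$ (the expression being defined and finite there) $$\left|ib+(1-|\zeta|^2)a\left\{(1-s)\left(1-\frac{\zeta g'(\zeta)}{g(\zeta)}\right)-s\frac{\zeta g''(\zeta)}{g'(\zeta)}\right\}\right|\le ak|s|-|b|(a-1).$$ Then for every $R>1$ the function $g_R(\zeta)=\frac1R g(R\zeta)$ is analytic in $\mathbb{D}^*$, has the form $\zeta+\frac{d'}{\zeta}+\cdots$ near $\infty$, and satisfies the same inequality (with $g$ replaced by $g_R$) for all $\zeta\in\mathbb{D}^*\setminus\{\infty\}$.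
   Context: $\mathbb{D}^*=\{\zeta\in\mathbb{C}\cup\{\infty\}:|\zeta|>1\}$. *)

(* Defs.v *)
From Stdlib Require Import Reals.
Open Scope R_scope.

Definition Cx : Type := (R * R)%type.
Definition RtoC (x : R) : Cx := (x, 0).
Definition Ci : Cx := (0, 1).
Definition Cadd (z w : Cx) : Cx := (fst z + fst w, snd z + snd w).
Definition Copp (z : Cx) : Cx := (- fst z, - snd z).
Definition Csub (z w : Cx) : Cx := Cadd z (Copp w).
Definition Cmul (z w : Cx) : Cx :=
  (fst z * fst w - snd z * snd w, fst z * snd w + snd z * fst w).
Definition Cinv (z : Cx) : Cx :=
  let n := fst z * fst z + snd z * snd z in (fst z / n, - snd z / n).
Definition Cdiv (z w : Cx) : Cx := Cmul z (Cinv w).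
Definition Cnorm (z : Cx) : R := sqrt (fst z * fst z + snd z * snd z).
Definition C0 : Cx := RtoC 0.
Definition C1 : Cx := RtoC 1.

Definition is_cderiv (f : Cx -> Cx) (l z : Cx) : Prop :=
  forall eps : R, 0 < eps -> exists del : R, 0 < del /\
    forall h : Cx, 0 < Cnorm h < del ->
      Cnorm (Csub (Cdiv (Csub (f (Cadd z h)) (f z)) h) l) < eps.

(* holomorphic (= analytic) on a set U (used only for open sets) *)
Definition holo_on (U : Cx -> Prop) (f : Cx -> Cx) : Prop :=
  forall z, U z -> exists l, is_cderiv f l z.

(* finite part of the exterior disk D^* = {|z| > 1} *)
Definition Dstar (z : Cx) : Prop := 1 < Cnorm z.

(* g is analytic in D^* including the point at infinity, with an expansion
   g(z) = z + d/z + ... near infinity: there are r > 0 and phi analytic on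
   |w| < r with phi(0) = 0 and g(z) = z + phi(1/z) for |z| > 1/r. *)
Definition expansion_at_infty (g : Cx -> Cx) : Prop :=
  exists (r : R) (phi : Cx -> Cx), 0 < r /\
    holo_on (fun w => Cnorm w < r) phi /\ phi C0 = C0 /\
    forall z, 1 < r * Cnorm z -> g z = Cadd z (phi (Cinv z)).

Definition Expr (a b : R) (g g1 g2 : Cx -> Cx) (z : Cx) : Cx :=
  let s : Cx := (a, b) in
  Cadd (Cmul Ci (RtoC b))
    (Cmul (RtoC ((1 - Cnorm z ^ 2) * a))
       (Csub (Cmul (Csub C1 s) (Csub C1 (Cdiv (Cmul z (g1 z)) (g z))))
             (Cmul s (Cdiv (Cmul z (g2 z)) (g1 z))))).

(* the inequality of the statement, with g' = g1, g'' = g2, on D^* *)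
Definition ineq_holds (a b k : R) (g g1 g2 : Cx -> Cx) : Prop :=
  forall z, Dstar z ->
    g z <> C0 /\ g1 z <> C0 /\
    Cnorm (Expr a b g g1 g2 z) <= a * k * Cnorm (a, b) - Rabs b * (a - 1).

Definition rescale (Rr : R) (g : Cx -> Cx) : Cx -> Cx :=
  fun z => Cmul (RtoC (/ Rr)) (g (Cmul (RtoC Rr) z)).

(* Main.v *)
Require Import Defs.
From Stdlib Require Import Reals Lra Psatz Classical.
Open Scope R_scope.

Lemma pair_eq (x y x' y' : R) : x = x' -> y = y' -> (x, y) = (x', y').
Proof. intros -> ->; reflexivity. Qed.

Ltac cx := repeat match goal with p : Cx |- _ => destruct p end;
  unfold Csub,Cdiv in *; unfold Cadd,Copp,Cmul,Cinv,RtoC,C0,Defs.C1,Ci in *; simpl in *;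
  apply pair_eq.

Lemma Cnorm_nonneg z : 0 <= Cnorm z.
Proof. apply sqrt_pos. Qed.

Lemma Cnorm_sq z : Cnorm z * Cnorm z = fst z * fst z + snd z * snd z.
Proof. unfold Cnorm. apply sqrt_sqrt. nra. Qed.

Lemma Cnorm_mul u v : Cnorm (Cmul u v) = Cnorm u * Cnorm v.
Proof.
  unfold Cnorm. rewrite <- sqrt_mult by nra. f_equal.
  destruct u, v; unfold Cmul; simpl; ring.
Qed.

Lemma Cnorm_RtoC c : Cnorm (RtoC c) = Rabs c.
Proof.
  unfold Cnorm, RtoC; simpl. replace (c*c+0*0) with (Rsqr c) by (unfold Rsqr; ring).
  apply sqrt_Rsqr_abs.
Qed.

Lemma Cnorm_pair0 c : Cnorm (c, 0) = Rabs c.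
Proof. apply Cnorm_RtoC. Qed.

Lemma Cnorm_opp z : Cnorm (Copp z) = Cnorm z.
Proof. unfold Cnorm, Copp; destruct z; simpl; f_equal; ring. Qed.

Lemma Cnorm_triangle u v : Cnorm (Cadd u v) <= Cnorm u + Cnorm v.
Proof.
  destruct u as [x1 y1], v as [x2 y2]. unfold Cadd, Cnorm; simpl.
  assert (Hs := sqrt_pos (x1*x1+y1*y1)). assert (Ht := sqrt_pos (x2*x2+y2*y2)).
  apply Rsqr_incr_0_var; [|nra].
  assert (Hq: 0 <= (x1 + x2) * (x1 + x2) + (y1 + y2) * (y1 + y2)) by (pose proof (Rle_0_sqr (x1+x2)); pose proof (Rle_0_sqr (y1+y2)); unfold Rsqr in *; lra).
  rewrite Rsqr_sqrt by exact Hq. unfold Rsqr.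
  replace ((sqrt (x1 * x1 + y1 * y1) + sqrt (x2 * x2 + y2 * y2)) *
    (sqrt (x1 * x1 + y1 * y1) + sqrt (x2 * x2 + y2 * y2))) with
    (sqrt (x1 * x1 + y1 * y1) * sqrt (x1 * x1 + y1 * y1) + sqrt (x2 * x2 + y2 * y2) * sqrt (x2 * x2 + y2 * y2) + 2 * (sqrt (x1 * x1 + y1 * y1) * sqrt (x2 * x2 + y2 * y2))) by ring.
  rewrite !sqrt_sqrt by nra. rewrite <- sqrt_mult by nra.
  assert (x1*x2+y1*y2 <= sqrt ((x1 * x1 + y1 * y1) * (x2 * x2 + y2 * y2))).
  { destruct (Rle_or_lt (x1*x2+y1*y2) 0). { assert (H0 := sqrt_pos ((x1 * x1 + y1 * y1) * (x2 * x2 + y2 * y2))); lra. }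
    apply Rsqr_incr_0_var; [|apply sqrt_pos]. rewrite Rsqr_sqrt by nra. unfold Rsqr.
    pose proof (Rle_0_sqr (x1*y2-x2*y1)); unfold Rsqr in *; nra. }
  nra.
Qed.

Lemma Cnorm_eq0 z : Cnorm z = 0 -> z = C0.
Proof.
  destruct z as [x y]; unfold Cnorm; simpl; intro H.
  apply sqrt_eq_0 in H; [|nra]. unfold C0, RtoC. apply pair_eq; nra.
Qed.

Lemma Cnorm_pos z : z <> C0 -> 0 < Cnorm z.
Proof. intro H. destruct (Cnorm_nonneg z); auto. exfalso; apply H, Cnorm_eq0; auto. Qed.

Lemma Cnorm_C0 : Cnorm C0 = 0.
Proof. unfold C0; rewrite Cnorm_RtoC, Rabs_R0; auto. Qed.

Lemma Cnorm_ne0 z : 0 < Cnorm z -> fst z * fst z + snd z * snd z <> 0.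
Proof. intros H E. unfold Cnorm in H. rewrite E, sqrt_0 in H. lra. Qed.

Lemma Cnorm_cinv_nz h : 0 < Cnorm h -> Cnorm (Cinv h) = / Cnorm h.
Proof.
  intro Hp. pose proof (Cnorm_ne0 _ Hp) as Hn.
  assert (E: Cmul h (Cinv h) = Defs.C1).
  { destruct h as [x y]; simpl in *. unfold Cmul, Cinv, Defs.C1, RtoC; simpl.
    apply pair_eq; field; auto. }
  assert (Cnorm h * Cnorm (Cinv h) = 1).
  { rewrite <- Cnorm_mul, E. unfold Defs.C1. rewrite Cnorm_RtoC. apply Rabs_R1. }
  field_simplify_eq; [lra| lra].
Qed.

Lemma scale_deriv (f : Cx -> Cx) (l z : Cx) (m c : R) :
  c <> 0 -> is_cderiv f l (Cmul (RtoC c) z) ->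
  is_cderiv (fun w => Cmul (RtoC m) (f (Cmul (RtoC c) w))) (Cmul (RtoC (m*c)) l) z.
Proof.
  intros Hc Hd eps He.
  set (K := Rabs (m*c) + 1).
  assert (HK : 0 < K) by (unfold K; pose proof (Rabs_pos (m*c)); lra).
  destruct (Hd (eps / K)) as [del [Hdel Hf]]. { apply Rdiv_lt_0_compat; auto. }
  assert (Hac : 0 < Rabs c) by (apply Rabs_pos_lt; auto).
  exists (del / Rabs c). split. { apply Rdiv_lt_0_compat; auto. }
  intros h [H1 H2].
  assert (Nch : Cnorm (Cmul (RtoC c) h) = Rabs c * Cnorm h) by (rewrite Cnorm_mul, Cnorm_RtoC; auto).
  assert (Hch : 0 < Cnorm (Cmul (RtoC c) h) < del).
  { rewrite Nch. split. { apply Rmult_lt_0_compat; auto. }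
    apply Rmult_lt_reg_l with (/ Rabs c). { apply Rinv_0_lt_compat; auto. }
    rewrite <- Rmult_assoc, Rinv_l by lra. unfold Rdiv in H2. lra. }
  specialize (Hf _ Hch).
  pose proof (Cnorm_ne0 _ H1) as Hn.
  assert (EQ: Csub (Cdiv (Csub (Cmul (RtoC m) (f (Cmul (RtoC c) (Cadd z h))))
                (Cmul (RtoC m) (f (Cmul (RtoC c) z)))) h) (Cmul (RtoC (m * c)) l)
    = Cmul (RtoC (m*c)) (Csub (Cdiv (Csub (f (Cadd (Cmul (RtoC c) z) (Cmul (RtoC c) h)))
           (f (Cmul (RtoC c) z))) (Cmul (RtoC c) h)) l)).
  { replace (Cmul (RtoC c) (Cadd z h)) with (Cadd (Cmul (RtoC c) z) (Cmul (RtoC c) h))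
      by (cx; ring).
    generalize (f (Cadd (Cmul (RtoC c) z) (Cmul (RtoC c) h))) (f (Cmul (RtoC c) z)).
    intros u v. destruct h as [h1 h2]; simpl in Hn. cx; field; (split; [|auto]);
    replace (c * h1 * (c * h1) + c * h2 * (c * h2)) with (c*c*(h1 * h1 + h2 * h2)) by ring;
    repeat apply Rmult_integral_contrapositive_currified; auto. }
  rewrite EQ, Cnorm_mul, Cnorm_RtoC.
  pose proof (Rabs_pos (m*c)). pose proof (Cnorm_nonneg (Csub (Cdiv (Csub (f (Cadd (Cmul (RtoC c) z) (Cmul (RtoC c) h)))
           (f (Cmul (RtoC c) z))) (Cmul (RtoC c) h)) l)).
  apply Rle_lt_trans with (K * Cnorm (Csub (Cdiv (Csub (f (Cadd (Cmul (RtoC c) z) (Cmul (RtoC c) h)))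
           (f (Cmul (RtoC c) z))) (Cmul (RtoC c) h)) l)).
  { unfold K. nra. }
  apply Rmult_lt_reg_l with (/K). { apply Rinv_0_lt_compat; auto. }
  rewrite <- Rmult_assoc, Rinv_l by lra. unfold Rdiv in Hf. lra.
Qed.

Lemma deriv_unique f l l' z : is_cderiv f l z -> is_cderiv f l' z -> l = l'.
Proof.
  intros H1 H2. destruct (classic (l = l')) as [|Hne]; auto. exfalso.
  assert (Hsub : Csub l l' <> C0).
  { intro E. apply Hne. destruct l, l'; unfold Csub, Cadd, Copp, C0, RtoC in E; simpl in E.
    injection E; intros; apply pair_eq; lra. }
  pose proof (Cnorm_pos _ Hsub) as He.
  destruct (H1 (Cnorm (Csub l l') / 2)) as [d1 [Hd1 F1]]. lra.
  destruct (H2 (Cnorm (Csub l l') / 2)) as [d2 [Hd2 F2]]. lra.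
  set (h := (Rmin d1 d2 / 2, 0) : Cx).
  assert (Nh : Cnorm h = Rmin d1 d2 / 2).
  { unfold h. rewrite Cnorm_pair0. apply Rabs_right. pose proof (Rmin_glb_lt d1 d2 0 Hd1 Hd2). lra. }
  pose proof (Rmin_glb_lt d1 d2 0 Hd1 Hd2). pose proof (Rmin_l d1 d2). pose proof (Rmin_r d1 d2).
  specialize (F1 h ltac:(lra)). specialize (F2 h ltac:(lra)).
  set (Q := Cdiv (Csub (f (Cadd z h)) (f z)) h) in *.
  assert (E : Csub l l' = Cadd (Csub Q l') (Copp (Csub Q l))) by (clear; cx; ring).
  pose proof (Cnorm_triangle (Csub Q l') (Copp (Csub Q l))). rewrite Cnorm_opp in H4.
  rewrite <- E in H4. lra.
Qed.

Lemma deriv_local f G l z rho : 0 < rho ->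
  (forall h, Cnorm h < rho -> f (Cadd z h) = G (Cadd z h)) ->
  is_cderiv f l z -> is_cderiv G l z.
Proof.
  intros Hr Heq Hd eps He. destruct (Hd eps He) as [d [Hd0 F]].
  exists (Rmin d rho). split. { apply Rmin_glb_lt; auto. }
  intros h [H1 H2].
  assert (Ez : f z = G z).
  { replace z with (Cadd z C0) by (cx; ring). apply Heq. rewrite Cnorm_C0; auto. }
  rewrite <- Ez, <- Heq. apply F. split; auto. pose proof (Rmin_l d rho); lra.
  pose proof (Rmin_r d rho); lra.
Qed.

Lemma Cnorm_scale c z : Cnorm (Cmul (RtoC c) z) = Rabs c * Cnorm z.
Proof. rewrite Cnorm_mul, Cnorm_RtoC; auto. Qed.

Lemma final_ineq (b a t1 t2 M : R) (K : Cx) :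
  1 < t1 -> t1 <= t2 -> Rabs b <= M ->
  Cnorm (Cadd (Cmul Ci (RtoC b)) (Cmul (RtoC ((1 - t2) * a)) K)) <= M ->
  Cnorm (Cadd (Cmul Ci (RtoC b)) (Cmul (RtoC ((1 - t1) * a)) K)) <= M.
Proof.
  intros H1 H2 Hb HM.
  set (t := (t1 - 1) / (t2 - 1)).
  assert (Ht0 : 0 < t) by (unfold t; apply Rdiv_lt_0_compat; lra).
  assert (Ht1 : t <= 1).
  { unfold t. apply Rmult_le_reg_r with (t2 - 1). lra. unfold Rdiv.
    rewrite Rmult_assoc, Rinv_l by lra. lra. }
  assert (E : Cadd (Cmul Ci (RtoC b)) (Cmul (RtoC ((1 - t1) * a)) K) =
    Cadd (Cmul (RtoC t) (Cadd (Cmul Ci (RtoC b)) (Cmul (RtoC ((1 - t2) * a)) K)))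
         (Cmul (RtoC (1 - t)) (Cmul Ci (RtoC b)))).
  { unfold t. cx; field; lra. }
  rewrite E. eapply Rle_trans. apply Cnorm_triangle.
  rewrite !Cnorm_scale, (Rabs_right t) by lra. rewrite (Rabs_right (1 - t)) by lra.
  assert (Cnorm (Cmul Ci (RtoC b)) = Rabs b).
  { rewrite Cnorm_mul, Cnorm_RtoC. unfold Ci, Cnorm; simpl.
    replace (0*0+1*1) with 1 by ring. rewrite sqrt_1; ring. }
  rewrite H. nra.
Qed.

Lemma quot1 (z G G1 : Cx) (Rr : R) : 0 < Rr -> G <> C0 ->
  Cdiv (Cmul z G1) (Cmul (RtoC (/ Rr)) G) = Cdiv (Cmul (Cmul (RtoC Rr) z) G1) G.
Proof.
  intros HR HG. pose proof (Cnorm_ne0 _ (Cnorm_pos _ HG)) as Hn.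
  destruct G as [x y]; simpl in Hn. cx; field;
  (split; [|lra]);
  try (split; [|lra]);
  replace (/ Rr * x * (/ Rr * x) + / Rr * y * (/ Rr * y)) with (/Rr * /Rr * (x*x+y*y)) by ring;
  repeat apply Rmult_integral_contrapositive_currified; auto;
  apply Rinv_neq_0_compat; lra.
Qed.

Theorem lemma3 (a b k : R) (g g1 g2 : Cx -> Cx) :
  1 <= a -> 0 <= k < 1 ->
  Cnorm (Cdiv (RtoC b) (a, b)) <= k ->
  holo_on Dstar g ->
  expansion_at_infty g ->
  (forall z, Dstar z -> is_cderiv g (g1 z) z) ->
  (forall z, Dstar z -> is_cderiv g1 (g2 z) z) ->
  ineq_holds a b k g g1 g2 ->
  forall Rr : R, 1 < Rr ->
    holo_on Dstar (rescale Rr g) /\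
    expansion_at_infty (rescale Rr g) /\
    forall h1 h2 : Cx -> Cx,
      (forall z, Dstar z -> is_cderiv (rescale Rr g) (h1 z) z) ->
      (forall z, Dstar z -> is_cderiv h1 (h2 z) z) ->
      ineq_holds a b k (rescale Rr g) h1 h2.
Proof.
  intros Ha Hk Hbk Hg Hexp Hg1 Hg2 Hineq Rr HR.
  assert (Nw : forall z, Cnorm (Cmul (RtoC Rr) z) = Rr * Cnorm z).
  { intro z. rewrite Cnorm_scale, Rabs_right by lra; auto. }
  assert (Dw : forall z, Dstar z -> Dstar (Cmul (RtoC Rr) z)).
  { unfold Dstar; intros z Hz. rewrite Nw. nra. }
  assert (C1l : forall l : Cx, Cmul (RtoC 1) l = l) by (intro l; cx; ring).
  assert (Hres : forall z, Dstar z -> is_cderiv (rescale Rr g) (g1 (Cmul (RtoC Rr) z)) z).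
  { intros z Hz. pose proof (scale_deriv g (g1 (Cmul (RtoC Rr) z)) z (/ Rr) Rr
      ltac:(lra) (Hg1 _ (Dw _ Hz))) as H.
    rewrite Rinv_l, C1l in H by lra. exact H. }
  split; [|split].
  - intros z Hz. eauto.
  - destruct Hexp as [r [phi [Hr [Hphi [H0 Hz]]]]].
    exists r, (fun u => Cmul (RtoC (/ Rr)) (phi (Cmul (RtoC (/ Rr)) u))).
    split; [auto|split; [|split]].
    + intros u Hu. destruct (Hphi (Cmul (RtoC (/ Rr)) u)) as [l Hl].
      { rewrite Cnorm_scale, Rabs_right. 2: { left; apply Rinv_0_lt_compat; lra. }
        pose proof (Cnorm_nonneg u).
        apply Rle_lt_trans with (Cnorm u); auto.
        rewrite <- (Rmult_1_l (Cnorm u)) at 2. apply Rmult_le_compat_r; auto.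
        rewrite <- Rinv_1. left. apply Rinv_lt_contravar; lra. }
      eexists. apply scale_deriv; [apply Rinv_neq_0_compat; lra| exact Hl].
    + replace (Cmul (RtoC (/ Rr)) C0) with C0 by (cx; ring).
      rewrite H0. cx; ring.
    + intros z Hrz. unfold rescale.
      assert (Hrz' : 1 < r * Cnorm (Cmul (RtoC Rr) z)).
      { rewrite Nw. pose proof (Cnorm_nonneg z). nra. }
      rewrite (Hz _ Hrz').
      assert (Hz0 : z <> C0).
      { intro E. rewrite E, Cnorm_C0 in Hrz. lra. }
      pose proof (Cnorm_ne0 _ (Cnorm_pos _ Hz0)) as Hn.
      replace (Cinv (Cmul (RtoC Rr) z)) with (Cmul (RtoC (/ Rr)) (Cinv z)).
      2: { destruct z as [x y]; simpl in Hn. cx; field; split; try lra;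
           replace (Rr * x * (Rr * x) + Rr * y * (Rr * y)) with (Rr * Rr * (x*x+y*y)) by ring;
           repeat apply Rmult_integral_contrapositive_currified; auto; lra. }
      generalize (phi (Cmul (RtoC (/ Rr)) (Cinv z))). intro p.
      cx; field; lra.
  - intros h1 h2 Hh1 Hh2.
    assert (Eh1 : forall u, Dstar u -> h1 u = g1 (Cmul (RtoC Rr) u)).
    { intros u Hu. eapply deriv_unique; eauto. }
    intros z Hz.
    assert (Eh2 : h2 z = Cmul (RtoC Rr) (g2 (Cmul (RtoC Rr) z))).
    { assert (HG := scale_deriv g1 (g2 (Cmul (RtoC Rr) z)) z 1 Rr ltac:(lra) (Hg2 _ (Dw _ Hz))).
      rewrite Rmult_1_l in HG.
      apply (deriv_unique h1 _ _ z (Hh2 z Hz)).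
      apply (deriv_local (fun w : Cx => Cmul (RtoC 1) (g1 (Cmul (RtoC Rr) w))) h1 _ z (Cnorm z - 1)).
      { unfold Dstar in Hz; lra. }
      2: exact HG.
      intros h Hh. rewrite C1l. symmetry. apply Eh1. unfold Dstar in *.
      pose proof (Cnorm_triangle (Cadd z h) (Copp h)). rewrite Cnorm_opp in H.
      replace (Cadd (Cadd z h) (Copp h)) with z in H by (cx; ring). lra. }
    destruct (Hineq _ (Dw _ Hz)) as [Gn [G1n Hb]].
    split; [|split].
    + unfold rescale. intro E. apply (f_equal Cnorm) in E.
      rewrite Cnorm_scale, Cnorm_C0 in E. pose proof (Cnorm_pos _ Gn).
      rewrite Rabs_right in E. 2: { left; apply Rinv_0_lt_compat; lra. }
      assert (0 < / Rr) by (apply Rinv_0_lt_compat; lra). nra.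
    + rewrite Eh1; auto.
    + unfold Expr in *. cbv zeta in *. rewrite Eh1, Eh2 by auto. unfold rescale.
      rewrite quot1 by (auto; lra).
      replace (Cmul z (Cmul (RtoC Rr) (g2 (Cmul (RtoC Rr) z)))) with
        (Cmul (Cmul (RtoC Rr) z) (g2 (Cmul (RtoC Rr) z))) by
        (generalize (g2 (Cmul (RtoC Rr) z)); intro; cx; ring).
      eapply final_ineq; [| | |exact Hb].
      * unfold Dstar in Hz. nra.
      * rewrite Nw. unfold Dstar in Hz. pose proof (Cnorm_nonneg z).
        simpl. assert (Cnorm z <= Rr * Cnorm z) by nra. apply Rmult_le_compat; try lra.
      * assert (Hs : (a, b) <> C0).
        { intro E. unfold C0, RtoC in E. injection E; intros; lra. }
        pose proof (Cnorm_pos _ Hs) as Hsp.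
        unfold Cdiv in Hbk. rewrite Cnorm_mul, Cnorm_RtoC, Cnorm_cinv_nz in Hbk by auto.
        assert (Rabs b <= k * Cnorm (a, b)).
        { apply Rmult_le_reg_r with (/ Cnorm (a, b)). apply Rinv_0_lt_compat; auto.
          rewrite Rmult_assoc, Rinv_r by lra. lra. }
        pose proof (Rabs_pos b). nra.
Qed.
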